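(* Let $G\ge 1$, let $\omega_1,\dots,\omega_G>0$ be weights with $\sum_{g=1}^G\omega_g=1$, let $P_1,\dots,P_G\in\mathbb{R}$, let $\beta>0$, let $\bar H\in[0,1]$ and set $C=2\bigl(\bar H-\tfrac12\bigr)\in[-1,1]$. Consider the equation for the unknown $\phi\in\mathbb{R}$ $$\sum_{g=1}^G \omega_g\,\frac{\tanh(\beta P_g)+\tanh(\beta\phi)}{1+\tanh(\beta P_g)\tanh(\beta\phi)}=C,$$ which is equivalent to $\sum_{g=1}^G \omega_g\,\tfrac12\bigl(1+\tanh(\beta(P_g+\phi))\bigr)=\bar H$. Let $\gamma\in\mathbb{R}$, define $A_g=\tanh(\beta P_g+\gamma)$ for $g=1,\dots,G$, and for $D\in[-1,1]$ define $$f(D)=\sum_{g=1}^G\omega_g\,\frac{A_g+D}{1+A_gD}-C,$$ so that with $D=\tanh(\beta\phi-\gamma)$ the equation above reads $f(D)=0$. Suppose that either (i) $\gamma<\min_g(-\beta P_g)=-\max_g(\beta P_g)$, or (ii) $\gamma>\max_g(-\beta P_g)=-\min_g(\beta P_g)$. Consider the Newton–Raphson iteration $D_{k+1}=D_k-f(D_k)/f'(D_k)$, with initial value $D_0=1$ in case (i) and $D_0=-1$ in case (ii). Then the sequence $(D_k)$ converges to the unique solution $D^\star\in[-1,1]$ of $f(D)=0$ (corresponding to the unique solution of the equation above); all terms of the sequence lie in $[-1,1]$; the sequence is monotonically decreasing in case (i) and monotonically increasing in case (ii); and the convergence is quadratic.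
   Context: This arises from enforcing, via a quadrature rule with nodes $\mathbf{x}_g$ and weights $\omega_g$, that the cell average of the THINC function $\tfrac12(1+\tanh(\beta(\mathcal{P}(\mathbf{x})+\phi)))$ equals a given volume fraction $\bar H$; here $P_g=\mathcal{P}(\mathbf{x}_g)$ are the values of a given polynomial at the quadrature nodes, and $\phi$ is the unknown shift. After solving for $D$, one recovers $\phi=\frac1\beta(\tanh^{-1}(D)+\gamma)$. *)

(* Defs.v *)
From Stdlib Require Import Reals List.
From Coquelicot Require Import Coquelicot.
Open Scope R_scope.

(* rsum G F = F 0 + F 1 + ... + F (G-1)  (the sum over g = 1..G, reindexed from 0) *)
Definition rsum (G : nat) (F : nat -> R) : R :=
  fold_right Rplus 0 (map F (seq 0 G)).

Fixpoint newton (f : R -> R) (D0 : R) (k : nat) : R :=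
  match k with
  | O => D0
  | S k' => let D := newton f D0 k' in D - f D / Derive f D
  end.

(* Main.v *)
Require Import Defs.
From Stdlib Require Import Reals List Lra Lia Psatz Ranalysis5.
From Coquelicot Require Import Coquelicot.
Open Scope R_scope.


Lemma fold_plus_acc (l : list R) (a : R) :
  fold_right Rplus a l = fold_right Rplus 0 l + a.
Proof. induction l; simpl; [lra | rewrite IHl; lra]. Qed.

Lemma rsum_0 F : rsum 0 F = 0.
Proof. reflexivity. Qed.

Lemma rsum_S n F : rsum (S n) F = rsum n F + F n.
Proof.
  unfold rsum. rewrite seq_S, map_app, fold_right_app. simpl.
  rewrite fold_plus_acc. lra.
Qed.

Lemma rsum_ext n F H : (forall g, (g < n)%nat -> F g = H g) -> rsum n F = rsum n H.
Proof.
  induction n; intros E; [reflexivity|]. rewrite !rsum_S, IHn, E; try lia; auto.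
Qed.

Lemma rsum_le n F H : (forall g, (g < n)%nat -> F g <= H g) -> rsum n F <= rsum n H.
Proof.
  induction n; intros E; [rewrite !rsum_0; lra|]. rewrite !rsum_S.
  assert (F n <= H n) by (apply E; lia).
  assert (rsum n F <= rsum n H) by (apply IHn; intros; apply E; lia). lra.
Qed.

Lemma rsum_pos n F : (1 <= n)%nat -> (forall g, (g < n)%nat -> 0 < F g) -> 0 < rsum n F.
Proof.
  intros Hn E. destruct n; [lia|]. rewrite rsum_S.
  assert (0 < F n) by (apply E; lia).
  assert (0 <= rsum n F).
  { replace 0 with (rsum n (fun _ => 0)).
    - apply rsum_le. intros; apply Rlt_le, E; lia.
    - clear. induction n; [reflexivity|]. rewrite rsum_S, IHn; lra. }
  lra.
Qed.

Lemma rsum_plus n F H : rsum n (fun g => F g + H g) = rsum n F + rsum n H.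
Proof. induction n; [rewrite !rsum_0; lra|]. rewrite !rsum_S, IHn; lra. Qed.

Lemma rsum_scal n c F : rsum n (fun g => c * F g) = c * rsum n F.
Proof. induction n; [rewrite !rsum_0; lra|]. rewrite !rsum_S, IHn; lra. Qed.

Lemma rsum_minus n F H : rsum n (fun g => F g - H g) = rsum n F - rsum n H.
Proof. induction n; [rewrite !rsum_0; lra|]. rewrite !rsum_S, IHn; lra. Qed.

Lemma rsum_derive n (F : nat -> R -> R) F' x :
  (forall g, (g < n)%nat -> is_derive (F g) x (F' g)) ->
  is_derive (fun y => rsum n (fun g => F g y)) x (rsum n F').
Proof.
  induction n; intros E.
  - apply is_derive_ext with (fun _ => 0). { intros; reflexivity. }
    rewrite rsum_0. apply (is_derive_const (K:=R_AbsRing) (V:=R_NormedModule) 0 x).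
  - apply is_derive_ext with (fun y => rsum n (fun g => F g y) + F n y).
    { intros; now rewrite rsum_S. }
    rewrite rsum_S. apply (is_derive_plus (K:=R_AbsRing) (V:=R_NormedModule) (fun y => rsum n (fun g => F g y)) (F n)).
    + apply IHn; intros; apply E; lia.
    + apply E; lia.
Qed.

Lemma tanh_bounds x : -1 < tanh x < 1.
Proof.
  unfold tanh, sinh, cosh. pose proof (exp_pos x); pose proof (exp_pos (-x)).
  split; apply Rmult_lt_reg_r with ((exp x + exp (- x)) / 2); try lra;
  field_simplify; lra.
Qed.

Lemma tanh_neg x : x < 0 -> tanh x < 0.
Proof.
  intros Hx. unfold tanh, sinh, cosh. pose proof (exp_pos x); pose proof (exp_pos (-x)).
  assert (exp x < exp (-x)) by (apply exp_increasing; lra).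
  apply Rmult_lt_reg_r with ((exp x + exp (- x)) / 2); try lra.
  field_simplify; lra.
Qed.

Lemma tanh_pos x : 0 < x -> 0 < tanh x.
Proof.
  intros Hx. unfold tanh, sinh, cosh. pose proof (exp_pos x); pose proof (exp_pos (-x)).
  assert (exp (-x) < exp x) by (apply exp_increasing; lra).
  apply Rmult_lt_reg_r with ((exp x + exp (- x)) / 2); try lra.
  field_simplify; lra.
Qed.

Lemma f_derive G w A C x :
  (forall g, (g < G)%nat -> 1 + A g * x <> 0) ->
  is_derive (fun D => rsum G (fun g => w g * ((A g + D)/(1 + A g * D))) - C) x
    (rsum G (fun g => w g * ((1 - A g ^ 2)/(1 + A g * x) ^ 2))).
Proof.
  intros Hx.
  replace (rsum G (fun g => w g * ((1 - A g ^ 2)/(1 + A g * x) ^ 2)))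
    with (rsum G (fun g => w g * ((1 - A g ^ 2)/(1 + A g * x) ^ 2)) - 0) by ring.
  apply (is_derive_minus (K:=R_AbsRing) (V:=R_NormedModule)
     (fun D => rsum G (fun g => w g * ((A g + D)/(1 + A g * D)))) (fun _ => C)).
  - apply (rsum_derive G (fun g D => w g * ((A g + D)/(1 + A g * D)))).
    intros g Hg. specialize (Hx g Hg). auto_derive.
    + exact Hx.
    + field. exact Hx.
  - apply (is_derive_const (K:=R_AbsRing) (V:=R_NormedModule) C x).
Qed.

Lemma f_diff G w A C x y :
  (forall g, (g < G)%nat -> 1 + A g * x <> 0) ->
  (forall g, (g < G)%nat -> 1 + A g * y <> 0) ->
  (rsum G (fun g => w g * ((A g + x)/(1 + A g * x))) - C) -
  (rsum G (fun g => w g * ((A g + y)/(1 + A g * y))) - C) =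
  (x - y) * rsum G (fun g => w g * ((1 - A g ^ 2)/((1 + A g * x) * (1 + A g * y)))).
Proof.
  intros Hx Hy. rewrite <- rsum_scal.
  replace ((rsum G (fun g => w g * ((A g + x)/(1 + A g * x))) - C) -
  (rsum G (fun g => w g * ((A g + y)/(1 + A g * y))) - C)) with
  (rsum G (fun g => w g * ((A g + x)/(1 + A g * x))) -
  rsum G (fun g => w g * ((A g + y)/(1 + A g * y)))) by ring.
  rewrite <- rsum_minus. apply rsum_ext. intros g Hg.
  specialize (Hx g Hg); specialize (Hy g Hg). field. split; auto.
Qed.

Lemma fp_S1 G w A x y :
  (forall g, (g < G)%nat -> 1 + A g * x <> 0) ->
  (forall g, (g < G)%nat -> 1 + A g * y <> 0) ->
  rsum G (fun g => w g * ((1 - A g ^ 2)/(1 + A g * x) ^ 2)) -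
  rsum G (fun g => w g * ((1 - A g ^ 2)/((1 + A g * x) * (1 + A g * y)))) =
  (x - y) * rsum G (fun g => w g * (- A g * (1 - A g ^ 2) / ((1 + A g * x) ^ 2 * (1 + A g * y)))).
Proof.
  intros Hx Hy. rewrite <- rsum_scal, <- rsum_minus. apply rsum_ext. intros g Hg.
  specialize (Hx g Hg); specialize (Hy g Hg). field. split; auto.
Qed.

Lemma a_bound G (A : nat -> R) :
  (forall g, (g < G)%nat -> -1 < A g < 1) ->
  exists a, 0 < a <= 1 /\ forall g, (g < G)%nat -> forall t, -1 <= t <= 1 ->
     a <= 1 + A g * t /\ a <= 1 - Rabs (A g).
Proof.
  induction G; intros HA.
  - exists 1. split; [lra|]. intros; lia.
  - destruct IHG as [a [Ha Hb]]. { intros; apply HA; lia. }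
    assert (HAn := HA G ltac:(lia)).
    exists (Rmin a (1 - Rabs (A G))).
    assert (0 < 1 - Rabs (A G)) by (unfold Rabs; destruct Rcase_abs; lra).
    split. { unfold Rmin; destruct Rle_dec; lra. }
    intros g Hg t Ht.
    assert (K: a <= 1 + A g * t /\ a <= 1 - Rabs (A g) \/ g = G).
    { destruct (Nat.eq_dec g G); [right; auto | left; apply Hb; auto; lia]. }
    assert (Rmin a (1 - Rabs (A G)) <= a) by apply Rmin_l.
    assert (Rmin a (1 - Rabs (A G)) <= 1 - Rabs (A G)) by apply Rmin_r.
    destruct K as [K|K]; [lra|]. subst g.
    split; [|lra]. unfold Rabs in *; destruct Rcase_abs; nra.
Qed.

Definition ff G w A C (D : R) := rsum G (fun g => w g * ((A g + D)/(1 + A g * D))) - C.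
Definition fp G w (A : nat -> R) x := rsum G (fun g => w g * ((1 - A g ^ 2)/(1 + A g * x) ^ 2)).

Lemma rsum_zero n : rsum n (fun _ => 0) = 0.
Proof. induction n; [reflexivity|]. rewrite rsum_S, IHn; lra. Qed.

Lemma step G w A C s a x y
  (HG : (1 <= G)%nat) (Hw : forall g, (g < G)%nat -> 0 < w g)
  (Ha : 0 < a <= 1)
  (Hab : forall g, (g < G)%nat -> forall t, -1 <= t <= 1 -> a <= 1 + A g * t /\ a <= 1 - Rabs (A g))
  (HA : forall g, (g < G)%nat -> -1 < A g < 1)
  (Hs : s = 1 \/ s = -1) (HsA : forall g, (g < G)%nat -> s * A g < 0)
  (Hx : -1 <= x <= 1) (Hy : -1 <= y <= 1) (Hfy : ff G w A C y = 0)
  (He : 0 <= s * (x - y)) :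
  let x' := x - ff G w A C x / fp G w A x in
  0 <= s * (x' - y) /\ s * x' <= s * x /\ s * (x' - y) <= (1 - a/2) * (s * (x - y)) /\
  Rabs (x' - y) <= (1/a) * (Rabs (x - y)) ^ 2.
Proof.
  intros x'.
  assert (Nx : forall g, (g < G)%nat -> 1 + A g * x <> 0).
  { intros g Hg. destruct (Hab g Hg x Hx). lra. }
  assert (Ny : forall g, (g < G)%nat -> 1 + A g * y <> 0).
  { intros g Hg. destruct (Hab g Hg y Hy). lra. }
  set (S1 := rsum G (fun g => w g * ((1 - A g ^ 2)/((1 + A g * x) * (1 + A g * y))))).
  set (S2 := rsum G (fun g => w g * (- A g * (1 - A g ^ 2) / ((1 + A g * x) ^ 2 * (1 + A g * y))))).
  set (P := fp G w A x).
  assert (Hfx : ff G w A C x = (x - y) * S1).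
  { pose proof (f_diff G w A C x y Nx Ny) as E. fold S1 in E. unfold ff in *. lra. }
  assert (HPS : P - S1 = (x - y) * S2) by (apply fp_S1; auto).
  assert (TW : forall g, (g < G)%nat ->
     let u := 1 + A g * x in let v := 1 + A g * y in
     a <= u <= 2 /\ a <= v <= 2 /\ 0 < 1 - A g ^ 2 /\ 0 <= - s * A g < 1 /\
     0 < (1 - A g ^ 2) / (u ^ 2 * v) /\
     (1 - A g ^ 2) / u ^ 2 = (1 - A g ^ 2) / (u ^ 2 * v) * v /\
     (1 - A g ^ 2) / (u * v) = (1 - A g ^ 2) / (u ^ 2 * v) * u /\
     - A g * (1 - A g ^ 2) / (u ^ 2 * v) = - A g * ((1 - A g ^ 2) / (u ^ 2 * v))).
  { intros g Hg. cbv zeta. destruct (Hab g Hg x Hx) as [Hu HAb]. destruct (Hab g Hg y Hy) as [Hv _]. set (u := 1 + A g * x) in *. set (v := 1 + A g * y) in *.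
    pose proof (HA g Hg). pose proof (HsA g Hg).
    assert (u <= 2) by (unfold u; nra). assert (v <= 2) by (unfold v; nra). clearbody u v.
    assert (0 < 1 - A g ^ 2) by nra.
    assert (0 < u) by lra. assert (0 < v) by lra.
    repeat split; try lra.
    - destruct Hs; subst; lra.
    - apply Rdiv_lt_0_compat; [lra|]. apply Rmult_lt_0_compat; [apply pow_lt|]; lra.
    all: field; lra. }
  assert (HP : 0 < P).
  { unfold P, fp. apply rsum_pos; auto. intros g Hg. destruct (TW g Hg) as (_&Hv&_&_&K&E&_).
    rewrite E. apply Rmult_lt_0_compat; [auto|]. apply Rmult_lt_0_compat; lra. }
  assert (HS1 : (a/2) * P <= S1).
  { unfold P, fp, S1. rewrite <- rsum_scal. apply rsum_le. intros g Hg.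
    destruct (TW g Hg) as (Hu&Hv&_&_&K&E1&E2&_). rewrite E1, E2.
    pose proof (Hw g Hg).
    set (k := (1 - A g ^ 2) / ((1 + A g * x) ^ 2 * (1 + A g * y))) in *.
    set (u := 1 + A g * x) in *. set (v := 1 + A g * y) in *. clearbody k u v.
    assert (0 <= u - a/2*v) by nra.
    assert (0 <= (w g * k) * (u - a/2*v)) by (apply Rmult_le_pos; nra).
    nra. }
  assert (HS2a : 0 <= s * S2).
  { unfold S2. rewrite <- rsum_scal. rewrite <- (rsum_zero G). apply rsum_le. intros g Hg.
    destruct (TW g Hg) as (Hu&Hv&_&Hsa&K&E1&E2&E3). rewrite E3.
    pose proof (Hw g Hg).
    set (k := (1 - A g ^ 2) / ((1 + A g * x) ^ 2 * (1 + A g * y))) in *. clearbody k.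
    assert (0 <= (w g * k) * (- s * A g)) by (apply Rmult_le_pos; nra).
    nra. }
  assert (HS2b : s * S2 <= (1/a) * P).
  { unfold P, fp, S2. rewrite <- !rsum_scal. apply rsum_le. intros g Hg.
    destruct (TW g Hg) as (Hu&Hv&_&Hsa&K&E1&E2&E3). rewrite E3, E1.
    pose proof (Hw g Hg).
    set (k := (1 - A g ^ 2) / ((1 + A g * x) ^ 2 * (1 + A g * y))) in *.
    set (v := 1 + A g * y) in *. clearbody k v.
    assert (Hia : (1/a) * a = 1) by (field; lra).
    assert (0 < 1/a) by (apply Rdiv_lt_0_compat; lra).
    set (ia := 1/a) in *. clearbody ia.
    assert (1 <= ia * v) by nra.
    assert (0 <= (w g * k) * (ia * v - (- s * A g))) by (apply Rmult_le_pos; nra).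
    nra. }
  assert (Ex' : x' - y = (x - y) ^ 2 * S2 / P).
  { unfold x'. fold P. rewrite Hfx.
    replace ((x - y) ^ 2 * S2) with ((x - y) * (P - S1)) by (rewrite HPS; ring).
    field. lra. }
  assert (Ex2 : s * x - s * x' = s * (x - y) * S1 / P).
  { unfold x'. fold P. rewrite Hfx. field. lra. }
  assert (Hss : s * s = 1) by (destruct Hs; subst; lra).
  assert (HPS' : P - S1 = (s * (x - y)) * (s * S2)).
  { rewrite HPS. replace (s * (x - y) * (s * S2)) with ((s * s) * ((x - y) * S2)) by ring.
    rewrite Hss; ring. }
  assert (E1 : s * (x' - y) = ((x - y) ^ 2 * (s * S2)) * / P).
  { rewrite Ex'. unfold Rdiv. ring. }
  assert (E2 : s * (x' - y) = (s * (x - y)) * (P - S1) * / P).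
  { rewrite Ex', HPS. unfold Rdiv. ring. }
  assert (E3 : s * x - s * x' = s * (x - y) * S1 * / P) by (rewrite Ex2; unfold Rdiv; ring).
  assert (HiP : 0 < / P) by (apply Rinv_0_lt_compat; lra).
  assert (HPi : P * / P = 1) by (field; lra).
  set (iP := / P) in *. clearbody iP.
  assert (Hxy2 : 0 <= (x - y) ^ 2) by apply pow2_ge_0.
  assert (Ha' : 0 <= s * (x' - y)).
  { rewrite E1. apply Rmult_le_pos; [apply Rmult_le_pos|]; lra. }
  split; [exact Ha'|]. split.
  { assert (0 <= s * (x - y) * S1 * iP).
    { apply Rmult_le_pos; [apply Rmult_le_pos|]; nra. }
    lra. }
  split.
  { rewrite E2.
    assert (0 <= s * (x - y) * (S1 - a/2 * P) * iP).
    { apply Rmult_le_pos; [apply Rmult_le_pos|]; nra. }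
    replace ((1 - a / 2) * (s * (x - y))) with ((s * (x - y)) * ((1 - a/2) * P) * iP).
    - nra.
    - transitivity ((s * (x - y)) * (1 - a/2) * (P * iP)); [ring|]. rewrite HPi. ring. }
  { assert (Rabs (x' - y) = s * (x' - y)).
    { destruct Hs; subst s.
      - rewrite Rabs_right; lra.
      - rewrite Rabs_left1; lra. }
    rewrite H, E1, pow2_abs.
    assert (0 <= (x - y) ^ 2 * ((1/a) * P - s * S2) * iP).
    { apply Rmult_le_pos; [apply Rmult_le_pos|]; lra. }
    replace (1 / a * (x - y) ^ 2) with ((x - y) ^ 2 * ((1 / a) * P) * iP).
    - nra.
    - transitivity ((x - y) ^ 2 * (1 / a) * (P * iP)); [ring|]. rewrite HPi. ring. }
Qed.

Lemma newton_S f d k : newton f d (S k) = newton f d k - f (newton f d k) / Derive f (newton f d k).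
Proof. reflexivity. Qed.

Lemma general G w A C s
  (HG : (1 <= G)%nat) (Hw : forall g, (g < G)%nat -> 0 < w g) (Hsum : rsum G w = 1)
  (HA : forall g, (g < G)%nat -> -1 < A g < 1)
  (Hs : s = 1 \/ s = -1) (HsA : forall g, (g < G)%nat -> s * A g < 0)
  (HC : -1 <= C <= 1) :
  exists Ds,
      (-1 <= Ds <= 1 /\ ff G w A C Ds = 0) /\
      (forall D, -1 <= D <= 1 -> ff G w A C D = 0 -> D = Ds) /\
      is_lim_seq (newton (ff G w A C) s) Ds /\
      (forall k, -1 <= newton (ff G w A C) s k <= 1) /\
      (forall k, s * newton (ff G w A C) s (S k) <= s * newton (ff G w A C) s k) /\
      (exists M, 0 <= M /\ forall k,
         Rabs (newton (ff G w A C) s (S k) - Ds) <= M * (Rabs (newton (ff G w A C) s k - Ds)) ^ 2).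
Proof.
  destruct (a_bound G A HA) as [a [Ha Hab]].
  assert (NZ : forall t, -1 <= t <= 1 -> forall g, (g < G)%nat -> 1 + A g * t <> 0).
  { intros t Ht g Hg. destruct (Hab g Hg t Ht). lra. }
  assert (HD : forall x, -1 <= x <= 1 -> Derive (ff G w A C) x = fp G w A x).
  { intros x Hx. apply is_derive_unique. apply f_derive. apply NZ; auto. }
  assert (Hf1 : ff G w A C 1 = 1 - C).
  { unfold ff. rewrite (rsum_ext G _ w).
    - rewrite Hsum; ring.
    - intros g Hg. pose proof (HA g Hg). field; lra. }
  assert (Hfm1 : ff G w A C (-1) = -1 - C).
  { unfold ff. rewrite (rsum_ext G _ (fun g => -1 * w g)).
    - rewrite rsum_scal, Hsum; ring.
    - intros g Hg. pose proof (HA g Hg). field; lra. }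
  assert (Hex : exists y, -1 <= y <= 1 /\ ff G w A C y = 0).
  { destruct (Req_dec C 1) as [E|E]. { exists 1; split; [lra| rewrite Hf1; lra]. }
    destruct (Req_dec C (-1)) as [E'|E']. { exists (-1); split; [lra| rewrite Hfm1; lra]. }
    destruct (IVT_interv (ff G w A C) (-1) 1) as [z [Hz1 Hz2]].
    - intros x Hx. apply derivable_continuous_pt.
      exists (fp G w A x). apply is_derive_Reals. apply f_derive. apply NZ; auto.
    - lra.
    - rewrite Hfm1; lra.
    - rewrite Hf1; lra.
    - exists z; auto. }
  destruct Hex as [y [Hy Hfy]].
  exists y.
  assert (Huniq : forall D, -1 <= D <= 1 -> ff G w A C D = 0 -> D = y).
  { intros D HDr HfD. pose proof (f_diff G w A C D y (NZ D HDr) (NZ y Hy)) as E.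
    change (ff G w A C D - ff G w A C y = (D - y) *
      rsum G (fun g => w g * ((1 - A g ^ 2) / ((1 + A g * D) * (1 + A g * y))))) in E.
    rewrite HfD, Hfy in E.
    assert (0 < rsum G (fun g => w g * ((1 - A g ^ 2) / ((1 + A g * D) * (1 + A g * y))))).
    { apply rsum_pos; auto. intros g Hg. apply Rmult_lt_0_compat; auto.
      destruct (Hab g Hg D HDr) as [H1 H2]. destruct (Hab g Hg y Hy) as [H3 _].
      pose proof (HA g Hg). apply Rdiv_lt_0_compat; [nra|]. apply Rmult_lt_0_compat; lra. }
    nra. }
  set (Dk := newton (ff G w A C) s).
  assert (Inv : forall k, -1 <= Dk k <= 1 /\ 0 <= s * (Dk k - y)).
  { induction k.
    - unfold Dk; simpl newton. destruct Hs; subst s; lra.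
    - destruct IHk as [Hb He].
      unfold Dk. rewrite newton_S. fold Dk. rewrite (HD _ Hb).
      destruct (step G w A C s a (Dk k) y HG Hw Ha Hab HA Hs HsA Hb Hy Hfy He) as (S1&S2&S3&S4).
      split; [|exact S1]. destruct Hs; subst s; lra. }
  assert (Step : forall k, let x' := Dk (S k) in
     0 <= s * (x' - y) /\ s * x' <= s * Dk k /\ s * (x' - y) <= (1 - a/2) * (s * (Dk k - y)) /\
     Rabs (x' - y) <= (1/a) * (Rabs (Dk k - y)) ^ 2).
  { intros k. destruct (Inv k) as [Hb He]. cbv zeta.
    assert (E : Dk (S k) = Dk k - ff G w A C (Dk k) / fp G w A (Dk k)).
    { unfold Dk. rewrite newton_S. fold Dk. rewrite (HD _ Hb). reflexivity. }
    rewrite E. exact (step G w A C s a (Dk k) y HG Hw Ha Hab HA Hs HsA Hb Hy Hfy He). }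
  split; [auto|]. split; [exact Huniq|].
  split.
  { set (q := 1 - a/2).
    assert (Hq : 0 <= q < 1) by (unfold q; lra).
    assert (Hgeo : forall k, Rabs (Dk k - y) <= 2 * q ^ k).
    { assert (forall k, s * (Dk k - y) <= 2 * q ^ k).
      { induction k.
        - unfold Dk; simpl. destruct Hs; subst s; lra.
        - destruct (Step k) as (_&_&S3&_). destruct (Inv k) as [_ He]. simpl pow.
          fold q in S3.
          assert (q * (s * (Dk k - y)) <= q * (2 * q ^ k)) by (apply Rmult_le_compat_l; lra).
          lra. }
      intros k. specialize (H k). destruct (Inv k) as [_ He].
      destruct Hs; subst s.
      - rewrite Rabs_right; lra.
      - rewrite Rabs_left1; lra. }
    assert (L2 : is_lim_seq (fun k => 2 * q ^ k) (2 * 0)).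
    { apply (is_lim_seq_scal_l (fun k => q ^ k) 2 0). apply is_lim_seq_geom. rewrite Rabs_right; lra. }
    apply is_lim_seq_le_le with (fun k => y - 2 * q ^ k) (fun k => y + 2 * q ^ k).
    - intros k. specialize (Hgeo k). apply Rabs_le_between' in Hgeo. lra.
    - assert (L : is_lim_seq (fun k => y - 2 * q ^ k) (y - 2 * 0)).
      { apply is_lim_seq_minus'. apply is_lim_seq_const. exact L2. }
      rewrite Rmult_0_r, Rminus_0_r in L. exact L.
    - assert (L : is_lim_seq (fun k => y + 2 * q ^ k) (y + 2 * 0)).
      { apply is_lim_seq_plus'. apply is_lim_seq_const. exact L2. }
      rewrite Rmult_0_r, Rplus_0_r in L. exact L. }
  split; [intros k; apply Inv|].
  split; [intros k; apply Step|].
  exists (1/a). split. { apply Rlt_le, Rdiv_lt_0_compat; lra. }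
  intros k; apply Step.
Qed.

Theorem lemma1 (G : nat) (w P : nat -> R) (beta Hbar gamma : R)
  (HG : (1 <= G)%nat)
  (Hw : forall g, (g < G)%nat -> 0 < w g)
  (Hsum : rsum G w = 1)
  (Hbeta : 0 < beta)
  (HH : 0 <= Hbar <= 1) :
  let C := 2 * (Hbar - 1 / 2) in
  let A := fun g => tanh (beta * P g + gamma) in
  let f := fun D => rsum G (fun g => w g * ((A g + D) / (1 + A g * D))) - C in
  (* case (i): gamma < min_g (- beta P_g), D_0 = 1, decreasing *)
  ((forall g, (g < G)%nat -> gamma < - (beta * P g)) ->
    exists Ds,
      (-1 <= Ds <= 1 /\ f Ds = 0) /\
      (forall D, -1 <= D <= 1 -> f D = 0 -> D = Ds) /\
      is_lim_seq (newton f 1) Ds /\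
      (forall k, -1 <= newton f 1 k <= 1) /\
      (forall k, newton f 1 (S k) <= newton f 1 k) /\
      (exists M, 0 <= M /\ forall k,
         Rabs (newton f 1 (S k) - Ds) <= M * (Rabs (newton f 1 k - Ds)) ^ 2)) /\
  (* case (ii): gamma > max_g (- beta P_g), D_0 = -1, increasing *)
  ((forall g, (g < G)%nat -> - (beta * P g) < gamma) ->
    exists Ds,
      (-1 <= Ds <= 1 /\ f Ds = 0) /\
      (forall D, -1 <= D <= 1 -> f D = 0 -> D = Ds) /\
      is_lim_seq (newton f (-1)) Ds /\
      (forall k, -1 <= newton f (-1) k <= 1) /\
      (forall k, newton f (-1) k <= newton f (-1) (S k)) /\
      (exists M, 0 <= M /\ forall k,
         Rabs (newton f (-1) (S k) - Ds) <= M * (Rabs (newton f (-1) k - Ds)) ^ 2)).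
Proof.
  intros C A f.
  replace f with (ff G w A C) by reflexivity.
  assert (HA : forall g, (g < G)%nat -> -1 < A g < 1).
  { intros g _. apply tanh_bounds. }
  assert (HC : -1 <= C <= 1) by (unfold C; lra).
  split; intros Hg.
  - assert (HsA : forall g, (g < G)%nat -> 1 * A g < 0).
    { intros g Hgg. specialize (Hg g Hgg). unfold A. rewrite Rmult_1_l.
      apply tanh_neg. lra. }
    destruct (general G w A C 1 HG Hw Hsum HA (or_introl eq_refl) HsA HC)
      as (Ds&H1&H2&H3&H4&H5&H6).
    exists Ds. repeat split; auto; try apply H1; try apply H4.
    intros k. specialize (H5 k). lra.
  - assert (HsA : forall g, (g < G)%nat -> -1 * A g < 0).
    { intros g Hgg. specialize (Hg g Hgg). unfold A.
      assert (0 < tanh (beta * P g + gamma)) by (apply tanh_pos; lra). lra. }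
    destruct (general G w A C (-1) HG Hw Hsum HA (or_intror eq_refl) HsA HC)
      as (Ds&H1&H2&H3&H4&H5&H6).
    exists Ds. repeat split; auto; try apply H1; try apply H4.
    intros k. specialize (H5 k). lra.
Qed.
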